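(* Let $\mu$ be a Borel probability measure on $\mathbb{R}^d$, $p$ a probability density with respect to $\mu$, and $Q$ a probability density on $\mathbb{R}^d$ with respect to Lebesgue measure. Let $x\sim p\,d\mu$ and $w\sim Q$ be independent and $\tilde x=x+w$, and let $p(\cdot\mid\tilde x)$ denote the conditional (deconvolution) density of $x$ given $\tilde x$ with respect to $\mu$, given by $p(x\mid\tilde x)=p(x)Q(\tilde x-x)/\int Q(\tilde x-x')p(x')\,d\mu(x')$. Fix $\tilde x,\tilde x'\in\mathbb{R}^d$ and suppose $\nabla^2Q$ and $\nabla\log Q$ exist and are continuous on $\mathcal{X}=\{(1-t)\tilde x+t\tilde x'-x: x\in\operatorname{supp}p,\ t\in[0,1]\}$. Then \[ \mathrm{TV}\big(p(\cdot\mid\tilde x),p(\cdot\mid\tilde x')\big)\le\|\tilde x-\tilde x'\|\cdot\sup_{z\in\mathcal{X}}\|\nabla\log Q(z)\|. \]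
   Context: $\operatorname{supp}p$ is the support of the measure $p\,d\mu$ (closure of the set of points all of whose open neighborhoods have positive measure). $\mathrm{TV}$ is total variation distance. *)

(* Defs.v *)
From HB Require Import structures.
From mathcomp Require Import all_boot all_order all_algebra.
From mathcomp Require Import all_classical all_reals all_analysis.
Set Implicit Arguments.
Unset Strict Implicit.
Unset Printing Implicit Defensive.
Import Order.TTheory GRing.Theory Num.Theory.
Import numFieldNormedType.Exports.
Local Open Scope classical_set_scope.
Local Open Scope ring_scope.

Definition Rd (R : realType) (d : nat) := g_sigma_algebraType (@open 'rV[R]_d).

Definition evec (R : realType) (d : nat) (i : 'I_d) : 'rV[R]_d := delta_mx 0 i.

Definition enorm (R : realType) (d : nat) (v : 'rV[R]_d) : R :=
  Num.sqrt (\sum_(i < d) (v 0 i) ^+ 2).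

Definition grad (R : realType) (d : nat) (f : 'rV[R]_d -> R) (x : 'rV[R]_d)
  : 'rV[R]_d := \row_(i < d) derive f x (evec R i).

Definition hess (R : realType) (d : nat) (f : 'rV[R]_d -> R) (x : 'rV[R]_d)
  : 'M[R]_d :=
  \matrix_(i < d, j < d) derive (fun y => derive f y (evec R i)) x (evec R j).

Definition supp (R : realType) (d : nat) (mu : {measure set (Rd R d) -> \bar R})
  (p : 'rV[R]_d -> R) : set 'rV[R]_d :=
  closure [set x : 'rV[R]_d | forall U : set 'rV[R]_d, open U -> U x ->
             (0 < \int[mu]_(y in (U : set (Rd R d))) (p y)%:E)%E].

Definition normc (R : realType) (d : nat) (mu : {measure set (Rd R d) -> \bar R})
  (p Q : 'rV[R]_d -> R) (xt : 'rV[R]_d) : \bar R :=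
  \int[mu]_x (Q (xt - x) * p x)%:E.

Definition cond_dens (R : realType) (d : nat) (mu : {measure set (Rd R d) -> \bar R})
  (p Q : 'rV[R]_d -> R) (xt : 'rV[R]_d) (x : 'rV[R]_d) : R :=
  p x * Q (xt - x) / fine (normc mu p Q xt).

Definition TV (R : realType) (d : nat) (mu : {measure set (Rd R d) -> \bar R})
  (f g : 'rV[R]_d -> R) : \bar R :=
  ereal_sup [set `| (\int[mu]_(x in A) (f x)%:E - \int[mu]_(x in A) (g x)%:E)%E |%E
            | A in (@measurable _ (Rd R d))].

Definition Xset (R : realType) (d : nat) (mu : {measure set (Rd R d) -> \bar R})
  (p : 'rV[R]_d -> R) (xt xt' : 'rV[R]_d) : set 'rV[R]_d :=
  [set z | exists x t, supp mu p x /\ 0 <= t <= 1 /\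
                       z = (1 - t) *: xt + t *: xt' - x].

(* Main.v *)
Set Warnings "-notation-overridden,-ambiguous-paths,-notation-incompatible-prefix".
Require Import Defs.
From HB Require Import structures.
From mathcomp Require Import all_boot all_order all_algebra.
From mathcomp Require Import all_classical all_reals all_analysis.
From mathcomp Require Import measurable_realfun.
From mathcomp Require Import ring lra.
Import Order.TTheory GRing.Theory Num.Theory.
Import numFieldNormedType.Exports.
Local Open Scope classical_set_scope.
Local Open Scope ring_scope.

Lemma aff_diff (R : realType) d (a D : 'rV[R]_d) (t : R) :
  differentiable (fun t : R => a + t *: D) t.
Proof.
apply: (@differentiableD _ _ _ (cst a) (fun t : R => t *: D)).
  exact: differentiable_cst.
apply: differentiableZl.
exact: ex_diff.
Qed.

Lemma mvt_bound (R : realType) d (f : 'rV[R]_d -> R) (a D : 'rV[R]_d) (s : R) :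
 (forall t : R, 0 <= t <= 1 -> differentiable f (a + t *: D)) ->
 (forall t : R, 0 <= t <= 1 -> `|'d f (a + t *: D) D| <= s) ->
 `|f (a + D) - f a| <= s.
Proof.
move=> Hd Hs.
pose phi t := f (a + t *: D).
have dphi (t : R) : 0 <= t <= 1 -> differentiable phi t.
  move=> /Hd h; have := differentiable_comp (@aff_diff R d a D t) h. done.
have derphi (t : R) : 0 <= t <= 1 -> derive phi t 1 = 'd f (a + t *: D) D.
  move=> /Hd h; rewrite -(deriveE D h).
  rewrite /derive.
  have -> : (fun h : R => h^-1 *: ((phi \o shift t) (h *: 1) - phi t)) =
    (fun h : R => h^-1 *: ((f \o shift (a + t *: D)) (h *: D) - f (a + t *: D))).
    apply: funext => h' /=.
    rewrite /phi /shift /=; congr (_ *: (f _ - _)).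

    by rewrite -[h'%:A]/(h' * 1) mulr1 scalerDl addrCA.
  by [].
have [c c01 E] : exists2 c, c \in `[0, 1]%R & phi 1 - phi 0 = derive phi c 1 * (1 - 0).
  apply: MVT_segment => //.
    move=> x; rewrite in_itv /= => /andP[x0 x1].
    apply: derivableP; apply: diff_derivable; apply: dphi.
    by rewrite !ltW.
  apply: continuous_in_subspaceT => x; rewrite inE /= in_itv /= => x01.
  exact: differentiable_continuous (dphi x x01).
move: E; rewrite /phi scale1r scale0r addr0 subr0 mulr1 => ->.
move: c01; rewrite in_itv /= => c01.
by rewrite derphi // Hs.
Qed.
Lemma cs_sq (R : realFieldType) (d : nat) (a b : 'I_d -> R) :
  (\sum_i a i * b i) ^+ 2 <= (\sum_i a i ^+ 2) * (\sum_i b i ^+ 2).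
Proof.
have E : \sum_i \sum_j (a i * b j - a j * b i) ^+ 2 =
  \sum_i \sum_j (a i ^+ 2 * b j ^+ 2) + \sum_i \sum_j (b i ^+ 2 * a j ^+ 2)
  - 2 * \sum_i \sum_j (a i * b i * (a j * b j)).
  rewrite mulr_sumr -big_split -sumrB; apply: eq_bigr => i _.
  rewrite mulr_sumr -big_split -sumrB; apply: eq_bigr => j _; rewrite /=; ring.
have : 0 <= \sum_i \sum_j (a i * b j - a j * b i) ^+ 2.
  by apply: sumr_ge0 => i _; apply: sumr_ge0 => j _; exact: sqr_ge0.
rewrite E -!big_distrlr /= => h; nra.
Qed.

Lemma cs_enorm (R : realType) d (a b : 'rV[R]_d) :
  `|\sum_i a 0 i * b 0 i| <= enorm a * enorm b.
Proof.
rewrite /enorm -sqrtrM; last by apply: sumr_ge0 => i _; exact: sqr_ge0.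
rewrite -sqrtr_sqr; apply: ler_wsqrtr.
exact: (@cs_sq R d (fun i => a 0 i) (fun i => b 0 i)).
Qed.

Lemma diff_grad (R : realType) d (f : 'rV[R]_d -> R) z D :
  differentiable f z -> 'd f z D = \sum_j D 0 j * grad f z 0 j.
Proof.
move=> df; rewrite {1}(row_sum_delta D) linear_sum; apply: eq_bigr => j _.
by rewrite linearZ /= mxE -deriveE.
Qed.

Lemma enormN (R : realType) d (a : 'rV[R]_d) : enorm (- a) = enorm a.
Proof. by rewrite /enorm; congr Num.sqrt; apply: eq_bigr => i _; rewrite mxE sqrrN. Qed.

Lemma enorm0 (R : realType) d (a : 'rV[R]_d) : enorm a = 0 -> a = 0.
Proof.
rewrite /enorm => /eqP; rewrite sqrtr_eq0 => h.
have : \sum_i a 0 i ^+ 2 == 0 by rewrite eq_le h sumr_ge0 // => i _; exact: sqr_ge0.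
rewrite psumr_eq0; last by move=> i _; exact: sqr_ge0.
move=> /allP H; apply/rowP => j; rewrite mxE; apply/eqP.
by rewrite -sqrf_eq0; apply: (H j); rewrite mem_index_enum.
Qed.

Lemma open_meas (R : realType) d (U : set 'rV[R]_d) : open U -> measurable (U : set (Rd R d)).
Proof. by move=> oU; apply: sub_sigma_algebra. Qed.

Definition rball (R : realType) d (qr : 'rV[rat]_d * rat) : set 'rV[R]_d :=
  @ball R 'rV[R]_d (map_mx (@ratr R) qr.1) (ratr qr.2).

Arguments rball {R d}.

Lemma rball_approx (R : realType) d (x : 'rV[R]_d) (e : R) : 0 < e ->
  exists qr, rball qr x /\ rball qr `<=` ball x e.
Proof.
move=> e0.
have [r /[!in_itv] /= /andP[r1 r2]] := @rat_in_itvoo R (e / 4) (e / 2) ltac:(lra).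
have : forall i : 'I_d, exists q : rat, ratr q \in `](x 0 i - e / 4), (x 0 i + e / 4)[.
  move=> i; apply: rat_in_itvoo; lra.
move=> /choice [f hf].
exists (\row_i f i, r); split.
- split; first lra.
  move=> i j; rewrite !mxE (ord1 i) /ball /=.
  move: (hf j); rewrite in_itv /= => /andP[h1 h2].
  rewrite ltr_distlC; apply/andP; split; lra.
- move=> y [_ hy]; apply: (@le_ball _ _ _ (e / 4 + ratr r)); first lra.
  apply: (@ball_triangle _ _ (map_mx (@ratr R) (\row_i f i)) x y); last first.
    by split => //; lra.
  split; first lra.
  move=> i j; rewrite !mxE (ord1 i) /ball /=.
  move: (hf j); rewrite in_itv /= => /andP[h1 h2].
  rewrite ltr_distlC; apply/andP; split; lra.
Qed.

Lemma supp_ae (R : realType) d (mu : {measure set (Rd R d) -> \bar R})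
  (p : 'rV[R]_d -> R) : measurable_fun [set: Rd R d] p -> (forall x, 0 <= p x) ->
  {ae mu, forall x : Rd R d, p x != 0 -> supp mu p x}.
Proof.
move=> mp p0.
pose good (qr : 'rV[rat]_d * rat) :=
  (\int[mu]_(y in (rball qr : set (Rd R d))) (p y)%:E <= 0)%E.
pose F (k : nat) : set (Rd R d) := if unpickle k is Some qr then
  (if `[< good qr >] then rball qr `&` [set x | p x != 0] else set0) else set0.
have negF k : mu.-negligible (F k).
  rewrite /F; case: (unpickle k) => [qr|]; last exact: negligible_set0.
  case: asboolP => [g|_]; last exact: negligible_set0.
  have mB : measurable (rball qr : set (Rd R d)) by apply: open_meas; exact: ball_open.
  have : (\int[mu]_(y in (rball qr : set (Rd R d))) `|(p y)%:E| = 0)%E.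
    apply/eqP; rewrite eq_le; apply/andP; split.
      by under eq_integral do rewrite gee0_abs ?lee_fin //.
    by apply: integral_ge0 => x _; exact: abse_ge0.
  move/(ae_eq_integral_abs mu mB).
  have mpE : measurable_fun (rball qr : set (Rd R d)) (fun x : Rd R d => (p x)%:E).
    by apply/measurable_EFinP; exact: measurable_funS mp.
  move=> /(_ mpE) ae; apply: negligibleS ae => x /= [bx px].
  by move=> /(_ bx) [] /eqP; rewrite (negbTE px).
apply: negligibleS (negligible_bigcup negF) => x /= /not_implyP[px nsx].
have nS : ~ (forall U : set 'rV[R]_d, open U -> U x ->
             (0 < \int[mu]_(y in (U : set (Rd R d))) (p y)%:E)%E).
  by move=> h; apply: nsx; apply: subset_closure.
move: nS => /existsNP [U /not_implyP [oU /not_implyP [Ux /negP]]].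
rewrite -leNgt => iU.
have : nbhs x U by apply: open_nbhs_nbhs.
move=> /nbhs_ballP [e /= e0 sU].
have [qr [bq sq]] := @rball_approx R d x e e0.
exists (pickle qr) => //.
rewrite /F pickleK; case: asboolP => [_|]; first by split.
case; rewrite /good; apply: le_trans iU.
apply: ge0_subset_integral => //.
- by apply: open_meas; exact: ball_open.
- exact: open_meas.
- by apply/measurable_EFinP; exact: measurable_funS mp.
- by move=> y _; rewrite lee_fin.
- by move=> y /sq /sU.
Qed.

Lemma sub_meas (R : realType) d (y : 'rV[R]_d) :
  measurable_fun [set: Rd R d] (fun x : Rd R d => (y - x : Rd R d)).
Proof.
apply: (measurability (open : set (set (Rd R d)))).
  by [].
move=> _ [U oU <-]. rewrite setTI. apply: sub_sigma_algebra.
apply: open_comp => // x _.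
apply: continuousB; [exact: cst_continuous | exact: cvg_id].
Qed.

Lemma q_meas (R : realType) d (p Q : 'rV[R]_d -> R) (y : 'rV[R]_d) :
  measurable_fun [set: Rd R d] p -> measurable_fun [set: Rd R d] Q ->
  measurable_fun [set: Rd R d] (fun x : Rd R d => ((Q (y - x) * p x)%:E)).
Proof.
move=> mp mQ; apply/measurable_EFinP.
apply: measurable_funM => //.
exact: (measurableT_comp mQ (@sub_meas R d y)).
Qed.

Lemma tv_poly (R : realFieldType) (u v u' v' rho : R) : 0 <= u -> 0 <= v -> 0 <= u' -> 0 <= v' -> 1 <= rho ->
  u <= rho * u' -> v' <= rho * v ->
  rho * u * (u'+v') - rho * u' * (u+v) <= (rho - 1) * (u+v) * (u'+v').
Proof. move=> u0 v0 u'0 v'0 r1 h1 h2.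
have [c|c] := lerP u ((rho - 1) * v).
- have h3 : 0 <= (rho * u' - u) * v by apply: mulr_ge0; lra.
  have h4 : 0 <= (rho * v - v') * ((rho - 1) * v - u) by apply: mulr_ge0; lra.
  have h5 : 0 <= (rho - 1) * (u * u') by apply: mulr_ge0; nra.
  have h6 : 0 <= (rho - 1) * (v * v') by apply: mulr_ge0; nra.
  have h7 : 0 <= (rho - 1) * (u' * v) by apply: mulr_ge0; nra.
  nra.
- have h3 : 0 <= (rho * u' - u) * v by apply: mulr_ge0; lra.
  have h4 : 0 <= (rho * v - v') * (u - (rho - 1) * v) by apply: mulr_ge0; lra.
  have h5 : 0 <= (rho - 1) * (u * u') by apply: mulr_ge0; nra.
  have h6 : 0 <= (rho - 1) * (v * v') by apply: mulr_ge0; nra.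
  have h7 : 0 <= (rho - 1) * (u' * v) by apply: mulr_ge0; nra.
  have h8 : 0 <= (rho * u' - u) * u by apply: mulr_ge0; lra.
  nra.
Qed.

Lemma frac_bound (R : realFieldType) (u v u' v' rho : R) :
  0 <= u -> 0 <= v -> 0 <= u' -> 0 <= v' -> 0 < u + v -> 0 < u' + v' ->
  1 <= rho -> u <= rho * u' -> v' <= rho * v ->
  u / (u + v) - u' / (u' + v') <= 1 - rho^-1.
Proof.
move=> u0 v0 u'0 v'0 W W' r1 h1 h2.
have := @tv_poly R u v u' v' rho u0 v0 u'0 v'0 r1 h1 h2 => T.
have E : u / (u + v) - u' / (u' + v') - (1 - rho^-1) =
  (rho * u * (u' + v') - rho * u' * (u + v) - (rho - 1) * (u + v) * (u' + v'))
   * (rho * (u + v) * (u' + v'))^-1.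
  field; apply/and3P; split; apply/eqP; lra.
rewrite -subr_le0 E; apply: mulr_le0_ge0; first lra.
by rewrite invr_ge0; apply: mulr_ge0; [apply: mulr_ge0|]; lra.
Qed.

Lemma dens_int (R : realType) d (mu : {measure set (Rd R d) -> \bar R})
  (p Q : 'rV[R]_d -> R) (y : 'rV[R]_d) (A : set (Rd R d)) :
  measurable_fun [set: Rd R d] p -> measurable_fun [set: Rd R d] Q ->
  (forall x, 0 <= p x) -> (forall z, 0 <= Q z) ->
  (normc mu p Q y < +oo)%E -> measurable A ->
  exists u, [/\ 0 <= u, u <= fine (normc mu p Q y),
    (\int[mu]_(x in A) ((Q (y - x) * p x)%:E) = u%:E)%E &
    (\int[mu]_(x in A) (cond_dens mu p Q y x)%:E = (u / fine (normc mu p Q y))%:E)%E].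
Proof.
move=> mp mQ p0 Q0 Nfin mA.
have mq := @q_meas R d p Q y mp mQ.
have q0 : forall x, (0 <= (Q (y - x) * p x)%:E)%E by move=> x; rewrite lee_fin mulr_ge0.
set N := normc mu p Q y.
have N0 : (0 <= N)%E by apply: integral_ge0 => x _.
have IA0 : (0 <= \int[mu]_(x in A) ((Q (y - x) * p x)%:E))%E by apply: integral_ge0 => x _.
have IAN : (\int[mu]_(x in A) ((Q (y - x) * p x)%:E) <= N)%E.
  by apply: ge0_subset_integral => //.
have IAfin : (\int[mu]_(x in A) ((Q (y - x) * p x)%:E))%E \is a fin_num.
  by rewrite ge0_fin_numE //; apply: le_lt_trans Nfin.
have Nfin' : N \is a fin_num by rewrite ge0_fin_numE.
exists (fine (\int[mu]_(x in A) ((Q (y - x) * p x)%:E))%E); split.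
- exact: fine_ge0.
- by apply: fine_le.
- by rewrite fineK.
- under eq_integral do rewrite /cond_dens (mulrC (p _)) EFinM.
  rewrite ge0_integralZr //; last by rewrite lee_fin invr_ge0 fine_ge0.
    by rewrite EFinM fineK.
  exact: measurable_funS mq.
Qed.

Lemma ratio_pt (R : realType) d (mu : {measure set (Rd R d) -> \bar R})
  (p Q : 'rV[R]_d -> R) (xt xt' : 'rV[R]_d) (s : R) (x : 'rV[R]_d) :
  (forall z, Xset mu p xt xt' z -> 0 < Q z /\ differentiable (fun y => ln (Q y)) z) ->
  (forall z, Xset mu p xt xt' z -> enorm (grad (fun y => ln (Q y)) z) <= s) ->
  supp mu p x ->
  Q (xt' - x) <= expR (enorm (xt - xt') * s) * Q (xt - x) /\
  Q (xt - x) <= expR (enorm (xt - xt') * s) * Q (xt' - x).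
Proof.
move=> Hlog Hs sx.
set f := fun y => ln (Q y).
set L := enorm (xt - xt') * s.
have Xa (t : R) : 0 <= t <= 1 -> Xset mu p xt xt' (xt - x + t *: (xt' - xt)).
  move=> t01; exists x, t; split => //; split => //.
  by apply/rowP => i; rewrite !mxE; ring.
have hD : enorm (xt' - xt) = enorm (xt - xt') by rewrite -opprB enormN.
have H : `|f (xt - x + (xt' - xt)) - f (xt - x)| <= L.
  apply: mvt_bound.
    by move=> t /Xa /Hlog [].
  move=> t /Xa Xt; have [_ df] := Hlog _ Xt.
  rewrite (@diff_grad R d f _ _ df).
  apply: le_trans (@cs_enorm R d (xt' - xt) (grad f (xt - x + t *: (xt' - xt)))) _.
  rewrite hD /L; apply: ler_wpM2l; first exact: sqrtr_ge0.
  exact: Hs.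
have e1 : xt - x + (xt' - xt) = xt' - x by apply/rowP => i; rewrite !mxE; ring.
rewrite e1 in H.
have Q0 : 0 < Q (xt - x).
  have := Xa 0; rewrite scale0r addr0 => /(_ ltac:(lra)) /Hlog []//.
have Q1 : 0 < Q (xt' - x).
  have := Xa 1; rewrite scale1r e1 => /(_ ltac:(lra)) /Hlog []//.
have E0 : Q (xt - x) = expR (f (xt - x)) by rewrite /f lnK // posrE.
have E1 : Q (xt' - x) = expR (f (xt' - x)) by rewrite /f lnK // posrE.
move: H; rewrite ler_distl => /andP[h1 h2].
split.
- by rewrite E1 E0 -expRD ler_expR; lra.
- by rewrite E1 E0 -expRD ler_expR; lra.
Qed.
Theorem proposition16 (R : realType) (d : nat)
  (mu : probability (Rd R d) R)
  (lam : {measure set (Rd R d) -> \bar R})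
  (Hlam : forall a b : 'rV[R]_d, (forall i, a 0 i <= b 0 i) ->
     lam [set x : Rd R d | forall i, a 0 i < x 0 i <= b 0 i]
       = (\prod_(i < d) (b 0 i - a 0 i))%:E)
  (p Q : 'rV[R]_d -> R)
  (p_meas : measurable_fun [set: Rd R d] p)
  (p_ge0 : forall x, 0 <= p x)
  (p_int : (\int[mu]_x (p x)%:E = 1)%E)
  (Q_meas : measurable_fun [set: Rd R d] Q)
  (Q_ge0 : forall z, 0 <= Q z)
  (Q_int : (\int[lam]_z (Q z)%:E = 1)%E)
  (xt xt' : 'rV[R]_d)
  (Hfin : (normc mu p Q xt < +oo)%E /\ (normc mu p Q xt' < +oo)%E)
  (HQ2 : forall z, Xset mu p xt xt' z ->
     (\forall y \near z, differentiable Q y) /\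
     (forall i : 'I_d, differentiable (fun y => derive Q y (evec R i)) z))
  (HQ2c : {within Xset mu p xt xt', continuous (hess Q)})
  (Hlog : forall z, Xset mu p xt xt' z ->
     0 < Q z /\ differentiable (fun y => ln (Q y)) z)
  (Hlogc : {within Xset mu p xt xt', continuous (grad (fun y => ln (Q y)))}) :
  (TV mu (cond_dens mu p Q xt) (cond_dens mu p Q xt')
   <= (enorm (xt - xt'))%:E *
      ereal_sup [set (enorm (grad (fun y => ln (Q y)) z))%:E
                | z in Xset mu p xt xt'])%E.
Proof.
have Hae := @supp_ae R d mu p p_meas p_ge0.
have mq y := @q_meas R d p Q y p_meas Q_meas.
have q0 y x : (0 <= (Q (y - x) * p x)%:E)%E by rewrite lee_fin mulr_ge0.
have nae0 : ~ {ae mu, forall x : Rd R d, p x = 0}.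
  move=> h.
  have : (\int[mu]_x (p x)%:E = \int[mu]_x (cst 0 x))%E.
    apply: ae_eq_integral => //.
    - by apply/measurable_EFinP.
    - by apply: filterS h => x -> _.
  rewrite p_int integral0 => /eqP; by rewrite eqe oner_eq0.
have hsupp : exists x, supp mu p x.
  apply: contrapT => nex; apply: nae0; apply: filterS Hae => x h.
  apply/eqP; apply: contraT => px; exfalso; apply: nex; exists x; exact: h.
have Npos (y : 'rV[R]_d) : (forall x, supp mu p x -> 0 < Q (y - x)) -> (0 < normc mu p Q y)%E.
  move=> Hy; rewrite lt0e integral_ge0 ?andbT //.
  apply/negP => /eqP N0.
  have : (\int[mu]_(x in setT) `|(Q (y - x) * p x)%:E| = 0)%E.
    by under eq_integral do rewrite gee0_abs ?q0 //.
  move/(ae_eq_integral_abs mu measurableT (mq y)) => h.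
  apply: nae0; move: h Hae; apply: filterS2 => x h1 h2.
  apply/eqP; apply: contraT => px.
  have := h1 I; rewrite /= => /eqP; rewrite eqe mulf_eq0 (negbTE px) orbF.
  by rewrite (gt_eqF (Hy _ (h2 px))).
have X0 x : supp mu p x -> Xset mu p xt xt' (xt - x).
  move=> sx; exists x, 0; split => //; split; first by rewrite lexx ler01.
  by apply/rowP => i; rewrite !mxE; ring.
have X1 x : supp mu p x -> Xset mu p xt xt' (xt' - x).
  move=> sx; exists x, 1; split => //; split; first by rewrite ler01 lexx.
  by apply/rowP => i; rewrite !mxE; ring.
have N0 := Npos xt (fun x sx => (Hlog _ (X0 x sx)).1).
have N1 := Npos xt' (fun x sx => (Hlog _ (X1 x sx)).1).
have [Hf0 Hf1] := Hfin.
set S := ereal_sup _.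
have [<-|neq] := eqVneq xt xt'.
  have -> : enorm (xt - xt) = 0.
    by rewrite subrr /enorm big1 ?sqrtr0 // => i _; rewrite mxE expr0n.
  rewrite mul0e; apply: ge_ereal_sup => _ [A mA <-].
  have [u [_ _ _ ->]] := @dens_int R d mu p Q xt A p_meas Q_meas p_ge0 Q_ge0 Hf0 mA.
  by rewrite -EFinB subrr abse0.
have en0 : 0 < enorm (xt - xt').
  rewrite lt_neqAle sqrtr_ge0 andbT eq_sym; apply/negP => /eqP /enorm0 /eqP.
  by rewrite subr_eq0 (negbTE neq).
case Sdef : S => [s| |].
- have Hs z : Xset mu p xt xt' z -> enorm (grad (fun y => ln (Q y)) z) <= s.
    move=> Xz; rewrite -lee_fin -Sdef; apply: ereal_sup_ubound; exists z => //.
  have [x0 sx0] := hsupp.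
  have s0 : 0 <= s.
    apply: le_trans (Hs _ (X0 x0 sx0)); exact: sqrtr_ge0.
  set L := enorm (xt - xt') * s.
  have L0 : 0 <= L by apply: mulr_ge0 => //; exact: sqrtr_ge0.
  set rho := expR L.
  have r1 : 1 <= rho by apply: le_trans (expR_ge1Dx L); lra.
  have rpt x := @ratio_pt R d mu p Q xt xt' s x Hlog Hs.
  have intle (y1 y2 : 'rV[R]_d) (A : set (Rd R d)) : measurable A ->
      (forall x, supp mu p x -> Q (y1 - x) <= rho * Q (y2 - x)) ->
      (\int[mu]_(x in A) ((Q (y1 - x) * p x)%:E) <=
       rho%:E * \int[mu]_(x in A) ((Q (y2 - x) * p x)%:E))%E.
    move=> mA H.
    have mq1 : measurable_fun A (fun x : Rd R d => (Q (y1 - x) * p x)%:E).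
      exact: measurable_funS (mq y1).
    have mq2 : measurable_fun A (fun x : Rd R d => (Q (y2 - x) * p x)%:E).
      exact: measurable_funS (mq y2).
    have r0 : (0 <= rho%:E)%E by rewrite lee_fin; lra.
    rewrite -(ge0_integralZl mu mA mq2 (fun x _ => q0 y2 x) r0).
    apply: ae_ge0_le_integral => //.
    - by move=> x _; apply: mule_ge0.
    - by apply: emeasurable_funM => //; exact: measurable_cst.
    apply: filterS Hae => x h _.
    rewrite -EFinM lee_fin.
    have [->|px] := eqVneq (p x) 0; first by rewrite !mulr0.
    rewrite mulrA ler_pM2r; first exact: H (h px).
    by rewrite lt_neqAle eq_sym px p_ge0.
  have i01 A : measurable A -> (\int[mu]_(x in A) ((Q (xt - x) * p x)%:E) <=
       rho%:E * \int[mu]_(x in A) ((Q (xt' - x) * p x)%:E))%E.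
    by move=> mA; apply: intle => // x sx; have [] := rpt x sx.
  have i10 A : measurable A -> (\int[mu]_(x in A) ((Q (xt' - x) * p x)%:E) <=
       rho%:E * \int[mu]_(x in A) ((Q (xt - x) * p x)%:E))%E.
    by move=> mA; apply: intle => // x sx; have [] := rpt x sx.
  have split_int y (A : set (Rd R d)) : measurable A ->
      normc mu p Q y = (\int[mu]_(x in A) ((Q (y - x) * p x)%:E) +
                        \int[mu]_(x in ~` A) ((Q (y - x) * p x)%:E))%E.
    move=> mA; rewrite /normc -(setUv A) ge0_integral_setU //.
    all: try exact: measurableC.
    all: try (by rewrite setUv).
    all: try (by move=> x _; exact: q0).
    all: try (by apply/disj_setPCl).
  have bnd : 1 - rho^-1 <= L.
    rewrite /rho -expRN; have := expR_ge1Dx (- L); lra.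
  rewrite -EFinM; apply: ge_ereal_sup => _ [A mA <-].
  have mAc : measurable (~` A) by exact: measurableC.
  have [u [u0 _ uE dE]] := @dens_int R d mu p Q xt A p_meas Q_meas p_ge0 Q_ge0 Hf0 mA.
  have [uc [uc0 _ ucE _]] := @dens_int R d mu p Q xt (~` A) p_meas Q_meas p_ge0 Q_ge0 Hf0 mAc.
  have [w [w0 _ wE dE']] := @dens_int R d mu p Q xt' A p_meas Q_meas p_ge0 Q_ge0 Hf1 mA.
  have [wc [wc0 _ wcE _]] := @dens_int R d mu p Q xt' (~` A) p_meas Q_meas p_ge0 Q_ge0 Hf1 mAc.
  have Z0 : fine (normc mu p Q xt) = u + uc by rewrite (split_int xt A mA) uE ucE.
  have Z1 : fine (normc mu p Q xt') = w + wc by rewrite (split_int xt' A mA) wE wcE.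
  have Zp0 : 0 < u + uc.
    by rewrite -Z0; apply: fine_gt0; rewrite N0 (lt_le_trans Hf0) // leey.
  have Zp1 : 0 < w + wc.
    by rewrite -Z1; apply: fine_gt0; rewrite N1 (lt_le_trans Hf1) // leey.
  have h1 : u <= rho * w by rewrite -lee_fin EFinM -uE -wE; exact: i01.
  have h2 : wc <= rho * uc by rewrite -lee_fin EFinM -ucE -wcE; exact: i10.
  have h3 : w <= rho * u by rewrite -lee_fin EFinM -uE -wE; exact: i10.
  have h4 : uc <= rho * wc by rewrite -lee_fin EFinM -ucE -wcE; exact: i01.
  rewrite dE dE' Z0 Z1 -EFinB abse_EFin lee_fin ler_norml -/L; apply/andP; split.
  + have := @frac_bound R w wc u uc rho w0 wc0 u0 uc0 Zp1 Zp0 r1 h3 h4; lra.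
  + have := @frac_bound R u uc w wc rho u0 uc0 w0 wc0 Zp0 Zp1 r1 h1 h2; lra.
- by rewrite gt0_muley ?lte_fin // leey.
- exfalso; have [x0 sx0] := hsupp.
  have : ((enorm (grad (fun y => ln (Q y)) (xt - x0)))%:E <= S)%E.
    by apply: ereal_sup_ubound; exists (xt - x0) => //; exact: X0.
  by rewrite Sdef leeNy_eq.
Qed.
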